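(* Let $S$ be an infinite semigroup and $\mu$ a left fairly invariant finitely-additive probability measure on $S$. If $S$ has a left zero $z$ (i.e. $zx=z$ for all $x\in S$), then $\mu(F)=0$ for every finite $F\subseteq S$. Similarly, if $\mu$ is right fairly invariant and $S$ has a right zero $z$ ($xz=z$ for all $x$), then $\mu(F)=0$ for every finite $F\subseteq S$.
   Context: For $s\in S$, $A\subseteq S$: $s$ acts injectively on the left (right) of $A$ if $a\mapsto sa$ ($a\mapsto as$) is injective on $A$. A finitely-additive probability measure is $\mu:\mathcal P(S)\to[0,1]$, $\mu(S)=1$, additive on disjoint sets. $\mu$ is left fairly invariant if $\mu(sA)=\mu(A)$ whenever $s$ acts injectively on the left of $A$; right fairly invariant if $\mu(As)=\mu(A)$ whenever $s$ acts injectively on the right of $A$. *)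

(* Defs.v *)
From Stdlib Require Import Reals List.
Open Scope R_scope.

(* Subsets of S are predicates S -> Prop (the full power set P(S)). *)
Definition finite_set {S : Type} (A : S -> Prop) : Prop :=
  exists l : list S, forall x, A x <-> In x l.

Definition infinite_type (S : Type) : Prop := ~ finite_set (fun _ : S => True).

Definition associative {S : Type} (op : S -> S -> S) : Prop :=
  forall x y z, op x (op y z) = op (op x y) z.

Definition fa_prob_measure {S : Type} (mu : (S -> Prop) -> R) : Prop :=
  (forall A, 0 <= mu A <= 1) /\
  mu (fun _ => True) = 1 /\
  (forall A B, (forall x, A x -> B x -> False) ->
     mu (fun x => A x \/ B x) = mu A + mu B).

Definition left_image {S : Type} (op : S -> S -> S) (s : S) (A : S -> Prop) : S -> Prop :=
  fun y => exists a, A a /\ y = op s a.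
Definition right_image {S : Type} (op : S -> S -> S) (A : S -> Prop) (s : S) : S -> Prop :=
  fun y => exists a, A a /\ y = op a s.

Definition acts_inj_left {S : Type} (op : S -> S -> S) (s : S) (A : S -> Prop) : Prop :=
  forall a b, A a -> A b -> op s a = op s b -> a = b.
Definition acts_inj_right {S : Type} (op : S -> S -> S) (s : S) (A : S -> Prop) : Prop :=
  forall a b, A a -> A b -> op a s = op b s -> a = b.

Definition left_fairly_invariant {S : Type} (op : S -> S -> S) (mu : (S -> Prop) -> R) : Prop :=
  forall s A, acts_inj_left op s A -> mu (left_image op s A) = mu A.
Definition right_fairly_invariant {S : Type} (op : S -> S -> S) (mu : (S -> Prop) -> R) : Prop :=
  forall s A, acts_inj_right op s A -> mu (right_image op A s) = mu A.

(* Main.v *)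
Require Import Defs.
From Stdlib Require Import Reals List Lra Lia ZArith Classical FunctionalExtensionality PropExtensionality.
Open Scope R_scope.

Lemma mu_ext {S : Type} (mu : (S -> Prop) -> R) (A B : S -> Prop) :
  (forall x, A x <-> B x) -> mu A = mu B.
Proof.
  intros H. f_equal. extensionality x. apply propositional_extensionality. apply H.
Qed.

Lemma mu_empty {S : Type} (mu : (S -> Prop) -> R) :
  fa_prob_measure mu -> mu (fun _ => False) = 0.
Proof.
  intros [_ [_ Hadd]].
  assert (H := Hadd (fun _ : S => False) (fun _ => False) (fun _ a _ => a)).
  cbv beta in H.
  rewrite (mu_ext mu (fun x => False \/ False) (fun _ => False)) in H by tauto.
  lra.
Qed.

Lemma mu_list {S : Type} (mu : (S -> Prop) -> R) (c : R) :
  fa_prob_measure mu -> (forall y, mu (fun x => x = y) = c) ->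
  forall l : list S, NoDup l -> mu (fun x => In x l) = INR (length l) * c.
Proof.
  intros Hm Hc l Hl. induction Hl as [|a l Ha Hl IH].
  - rewrite (mu_ext mu (fun x => In x nil) (fun _ => False)) by (simpl; tauto). simpl.
    rewrite mu_empty by exact Hm. lra.
  - destruct Hm as [H1 [H2 Hadd]].
    rewrite (mu_ext mu (fun x => In x (a :: l)) (fun x => x = a \/ In x l)) by (simpl; intuition).
    rewrite Hadd.
    + rewrite Hc, IH. simpl length. rewrite S_INR. lra.
    + intros x -> Hx. contradiction.
Qed.

Lemma nodup_lists {S : Type} : infinite_type S ->
  forall n, exists l : list S, NoDup l /\ length l = n.
Proof.
  intros Hinf n. induction n as [|n [l [Hl Hlen]]].
  - exists nil. split; [constructor | reflexivity].
  - destruct (classic (exists x, ~ In x l)) as [[x Hx]|Hno].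
    + exists (x :: l). split; [constructor; auto | simpl; lia].
    + exfalso. apply Hinf. exists l. intros x. split; [|tauto].
      intros _. apply NNPP. intros H. apply Hno. eauto.
Qed.

Lemma nodup_of {S : Type} (l : list S) :
  exists l', NoDup l' /\ forall x, In x l <-> In x l'.
Proof.
  induction l as [|a l [l' [Hn Hi]]].
  - exists nil. split; [constructor | simpl; tauto].
  - destruct (classic (In a l')) as [Ha|Ha].
    + exists l'. split; auto. intros x. simpl. rewrite Hi. split; [intros [<-|H]; auto | auto].
    + exists (a :: l'). split; [constructor; auto|]. intros x. simpl. rewrite Hi. tauto.
Qed.

Lemma generic {S : Type} (mu : (S -> Prop) -> R) (c : R) :
  infinite_type S -> fa_prob_measure mu -> (forall y, mu (fun x => x = y) = c) ->
  forall F : S -> Prop, finite_set F -> mu F = 0.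
Proof.
  intros Hinf Hm Hc F [l Hl].
  assert (Hbound : forall n, INR n * c <= 1).
  { intros n. destruct (nodup_lists Hinf n) as [l0 [Hn Hlen]].
    rewrite <- Hlen, <- (mu_list mu c Hm Hc l0 Hn). apply Hm. }
  assert (Hc0 : 0 <= c).
  { destruct (nodup_lists Hinf 1) as [[|y l0] [_ Hlen]]; [discriminate|].
    rewrite <- (Hc y). apply Hm. }
  assert (c = 0).
  { destruct (Rle_lt_or_eq_dec 0 c Hc0) as [Hp|]; [|auto].
    exfalso. destruct (archimed (/ c)) as [Hup _].
    assert (Hpos : (0 < up (/ c))%Z).
    { apply lt_IZR. assert (0 < / c) by (apply Rinv_0_lt_compat; auto). simpl. lra. }
    specialize (Hbound (Z.to_nat (up (/ c)))).
    rewrite INR_IZR_INZ, Z2Nat.id in Hbound by lia.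
    assert (/ c * c = 1) by (field; lra).
    assert (IZR (up (/ c)) * c > / c * c) by (apply Rmult_gt_compat_r; auto).
    lra. }
  destruct (nodup_of l) as [l' [Hn Hi]].
  rewrite (mu_ext mu F (fun x => In x l')) by (intros x; rewrite Hl; apply Hi).
  rewrite (mu_list mu c Hm Hc l' Hn). subst c. ring.
Qed.

Theorem mainTheorem7 (S : Type) (op : S -> S -> S)
  (Hassoc : associative op) (Hinf : infinite_type S) :
  (forall mu : (S -> Prop) -> R, fa_prob_measure mu -> left_fairly_invariant op mu ->
     forall z : S, (forall x, op z x = z) ->
     forall F : S -> Prop, finite_set F -> mu F = 0)
  /\
  (forall mu : (S -> Prop) -> R, fa_prob_measure mu -> right_fairly_invariant op mu ->
     forall z : S, (forall x, op x z = z) ->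
     forall F : S -> Prop, finite_set F -> mu F = 0).
Proof.
  split.
  - intros mu Hm Hl z Hz. apply (generic mu (mu (fun x => x = z)) Hinf Hm).
    intros y. rewrite <- (Hl z (fun x => x = y)).
    + apply mu_ext. intros x. unfold left_image. split.
      * intros [a [-> ->]]. auto.
      * intros ->. exists y. auto.
    + intros a b -> -> _. reflexivity.
  - intros mu Hm Hr z Hz. apply (generic mu (mu (fun x => x = z)) Hinf Hm).
    intros y. rewrite <- (Hr z (fun x => x = y)).
    + apply mu_ext. intros x. unfold right_image. split.
      * intros [a [-> ->]]. auto.
      * intros ->. exists y. auto.
    + intros a b -> -> _. reflexivity.
Qed.
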